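(* Let $A=((((N(A_1)\setminus N(A_2))\cup N(A_3))\setminus N(A_4))\cdots)$ be a drawable set witnessed by $A_1,\dots,A_n\subseteq\mathbb{R}^2$, and let $\mathrm{SN}$ denote the stationary number with respect to this witness. Let $S,T\subseteq\mathbb{R}^2$ be nonempty sets such that $S$ encircles $T$ and for every pair $(x,y)\in S\times T$ exactly one of $x,y$ lies in $A$. Then $\max_{x\in S}\mathrm{SN}(x)>\max_{y\in T}\mathrm{SN}(y)$.
   Context: For $X\subseteq\mathbb{R}^2$ let $N(X)=\{x\in\mathbb{R}^2: |x-a|<1 \text{ for some } a\in X\}$. A set $A$ is drawable, witnessed by $A_1,\dots,A_n$, if $A=D_n$ where $D_1=N(A_1)$, $D_k=D_{k-1}\cup N(A_k)$ for odd $k\ge 3$ and $D_k=D_{k-1}\setminus N(A_k)$ for even $k$. For $x\in\mathbb{R}^2$ the stationary number is $\mathrm{SN}(x)=\min\{k \text{ odd}: x\in N(A_k) \text{ and } x\notin N(A_{k'}) \text{ for all even } k'>k\}$ if $x\in A$, and $\mathrm{SN}(x)=\min\{k \text{ even}: x\in N(A_k) \text{ and } x\notin N(A_{k'}) \text{ for all odd } k'>k\}$ if $x\notin A$. A set $S$ encircles a set $T$ if for every $x\in\mathbb{R}^2$, if the open unit disk $B(x,1)$ satisfies $B(x,1)\cap S=\emptyset$ then $B(x,1)\cap T=\emptyset$. *)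

(* Defs.v *)
From Stdlib Require Import Reals Lra Lia ClassicalEpsilon.
Open Scope R_scope.

Definition point : Type := (R * R)%type.
Definition pset : Type := point -> Prop.

Definition dist2 (x a : point) : R :=
  sqrt ((fst x - fst a)^2 + (snd x - snd a)^2).

Definition Nbhd (X : pset) : pset := fun x => exists a, X a /\ dist2 x a < 1.

Definition ball1 (x : point) : pset := fun z => dist2 z x < 1.

(* D_k for a witness A_1, A_2, ... (A indexed by nat, A 0 unused).
   D_0 = empty, so D_1 = N(A_1); odd k >= 3: union; even k: difference. *)
Fixpoint Dset (A : nat -> pset) (k : nat) : pset :=
  match k with
  | O => fun _ => False
  | S k' => if Nat.even (S k')
            then fun x => Dset A k' x /\ ~ Nbhd (A (S k')) x
            else fun x => Dset A k' x \/ Nbhd (A (S k')) x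
  end.

Definition drawn (A : nat -> pset) (n : nat) : pset := Dset A n.

Definition SN_cond (A : nat -> pset) (n : nat) (x : point) (k : nat) : Prop :=
  (1 <= k <= n)%nat /\
  (drawn A n x ->
     Nat.odd k = true /\ Nbhd (A k) x /\
     forall k', (k < k' <= n)%nat -> Nat.even k' = true -> ~ Nbhd (A k') x) /\
  (~ drawn A n x ->
     Nat.even k = true /\ Nbhd (A k) x /\
     forall k', (k < k' <= n)%nat -> Nat.odd k' = true -> ~ Nbhd (A k') x).

Fixpoint search (P : nat -> Prop) (k fuel : nat) : nat :=
  match fuel with
  | O => O
  | S f => if excluded_middle_informative (P k) then k else search P (S k) f
  end.

Definition SN (A : nat -> pset) (n : nat) (x : point) : nat :=
  search (SN_cond A n x) 0 (S n).

Definition is_max (X : pset) (f : point -> nat) (m : nat) : Prop :=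
  (exists x, X x /\ f x = m) /\ (forall x, X x -> (f x <= m)%nat).

Definition encircles (S T : pset) : Prop :=
  forall x, (forall s, S s -> ~ ball1 x s) -> (forall t, T t -> ~ ball1 x t).

(* Main.v *)
Require Import Defs.
From Stdlib Require Import Reals.
From Stdlib Require Import Lia Classical Arith ClassicalEpsilon.

Lemma search_spec (P : nat -> Prop) : forall f k,
  (exists i, (k <= i < k + f)%nat /\ P i) -> P (search P k f).
Proof.
  induction f as [|f IH]; intros k [i [Hi Pi]]; simpl.
  - lia.
  - destruct (excluded_middle_informative (P k)) as [H|H]; [exact H|].
    apply IH. exists i. split; [|exact Pi].
    assert (i <> k) by (intro; subst; contradiction). lia.
Qed.

Lemma search_none (P : nat -> Prop) : forall f k,
  (forall i, ~ P i) -> search P k f = 0%nat.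
Proof.
  induction f as [|f IH]; intros k H; simpl; [reflexivity|].
  destruct (excluded_middle_informative (P k)) as [H'|H'].
  - exfalso; exact (H k H').
  - apply IH; exact H.
Qed.

Lemma search_bound (P : nat -> Prop) : forall f k,
  search P k f = 0%nat \/ (search P k f < k + f)%nat.
Proof.
  induction f as [|f IH]; intros k; simpl; [left; reflexivity|].
  destruct (excluded_middle_informative (P k)) as [H'|H'].
  - right; lia.
  - destruct (IH (S k)); [left|right]; lia.
Qed.

Lemma SN_le A n x : (SN A n x <= n)%nat.
Proof.
  unfold SN. destruct (search_bound (SN_cond A n x) (S n) 0); lia.
Qed.

Lemma SN_spec A n x : (exists k, SN_cond A n x k) -> SN_cond A n x (SN A n x).
Proof.
  intros [k Hk]. unfold SN. apply search_spec. exists k.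
  split; [|exact Hk]. destruct Hk as [H _]. lia.
Qed.

Lemma max_exists (X : pset) (f : point -> nat) : forall b,
  (exists x, X x) -> (forall x, X x -> (f x <= b)%nat) -> exists m, is_max X f m.
Proof.
  induction b as [|b IH]; intros [x0 Hx0] Hb.
  - exists 0%nat. split.
    + exists x0. split; [exact Hx0|]. specialize (Hb x0 Hx0). lia.
    + exact Hb.
  - destruct (classic (exists x, X x /\ f x = S b)) as [H|H].
    + exists (S b). split; [exact H|exact Hb].
    + apply IH; [exists x0; exact Hx0|].
      intros x Hx. specialize (Hb x Hx).
      assert (f x <> S b) by (intro; apply H; exists x; auto). lia.
Qed.

Lemma Dset_S A m x : Dset A (Datatypes.S m) x <->
  (if Nat.even (Datatypes.S m) then (Dset A m x /\ ~ Nbhd (A (Datatypes.S m)) x)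
   else (Dset A m x \/ Nbhd (A (Datatypes.S m)) x)).
Proof.
  change (Dset A (Datatypes.S m) x) with ((if Nat.even (Datatypes.S m) then fun y => Dset A m y /\ ~ Nbhd (A (Datatypes.S m)) y else fun y => Dset A m y \/ Nbhd (A (Datatypes.S m)) y) x).
  destruct (Nat.even (Datatypes.S m)); tauto.
Qed.

Lemma Dstable A x : forall m j, (j <= m)%nat ->
  (forall i, (j < i <= m)%nat -> ~ Nbhd (A i) x) ->
  (Dset A m x <-> Dset A j x).
Proof.
  induction m as [|m IH]; intros j Hj H.
  - assert (j = 0%nat) by lia. subst. tauto.
  - destruct (Nat.eq_dec j (S m)) as [->|Hne]; [tauto|].
    assert (Hm : ~ Nbhd (A (S m)) x) by (apply H; lia).
    rewrite <- (IH j) by (lia || (intros i Hi; apply H; lia)).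
    rewrite Dset_S. destruct (Nat.even (Datatypes.S m)); tauto.
Qed.

Lemma Dn_some A x : forall m, Dset A m x -> exists j, (1 <= j <= m)%nat /\ Nbhd (A j) x.
Proof.
  induction m as [|m IH]; intros H0; [simpl in H0; tauto|].
  apply Dset_S in H0. destruct (Nat.even (S m)); revert H0.
  - intros [H _]. destruct (IH H) as [j [Hj Nj]]. exists j. split; [lia|exact Nj].
  - intros [H|H].
    + destruct (IH H) as [j [Hj Nj]]. exists j. split; [lia|exact Nj].
    + exists (S m). split; [lia|exact H].
Qed.

Lemma largest (P : nat -> Prop) : forall n j, P j -> (j <= n)%nat ->
  exists j', P j' /\ (j <= j' <= n)%nat /\ forall i, (j' < i <= n)%nat -> ~ P i.
Proof.
  induction n as [|n IH]; intros j Pj Hj.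
  - exists j. split; [exact Pj|]. split; [lia|]. intros; lia.
  - destruct (classic (P (S n))) as [H|H].
    + exists (S n). split; [exact H|]. split; [lia|]. intros; lia.
    + destruct (Nat.eq_dec j (S n)) as [->|Hne]; [contradiction|].
      destruct (IH j Pj ltac:(lia)) as [j' [P' [H1 H2]]].
      exists j'. split; [exact P'|]. split; [lia|].
      intros i Hi. destruct (Nat.eq_dec i (S n)) as [->|Hi']; [exact H|].
      apply H2; lia.
Qed.

Lemma odd_even k : Nat.odd k = true -> Nat.even k = true -> False.
Proof. intros H1 H2. rewrite <- Nat.negb_even in H1. rewrite H2 in H1. discriminate. Qed.

Lemma witness_exists A n x : (exists j, (1 <= j <= n)%nat /\ Nbhd (A j) x) ->
  exists k, SN_cond A n x k.
Proof.
  intros [j0 [Hj0 N0]].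
  destruct (largest (fun j => Nbhd (A j) x) n j0 N0 ltac:(lia)) as [j [Nj [Hj Hl]]].
  assert (Hst : Dset A n x <-> Dset A j x) by (apply Dstable; [lia|exact Hl]).
  destruct j as [|j']; [lia|].
  exists (S j'). unfold SN_cond, drawn.
  split; [lia|]. split.
  - intros HD. apply Hst in HD. apply Dset_S in HD.
    destruct (Nat.even (S j')) eqn:E.
    + destruct HD as [_ HD]; contradiction.
    + split; [rewrite <- Nat.negb_even, E; reflexivity|]. split; [exact Nj|].
      intros k' Hk' _. apply Hl; lia.
  - intros HD. rewrite Hst, Dset_S in HD.
    destruct (Nat.even (S j')) eqn:E.
    + split; [reflexivity|]. split; [exact Nj|]. intros k' Hk' _. apply Hl; lia.
    + exfalso. apply HD. right. exact Nj.
Qed.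

Theorem lemma3p3 (A : nat -> pset) (n : nat) (S T : pset) :
  (1 <= n)%nat ->
  (exists s, S s) -> (exists t, T t) ->
  encircles S T ->
  (forall x y, S x -> T y ->
     (drawn A n x /\ ~ drawn A n y) \/ (~ drawn A n x /\ drawn A n y)) ->
  exists mS mT, is_max S (SN A n) mS /\ is_max T (SN A n) mT /\ (mT < mS)%nat.
Proof.
  intros Hn [s0 Hs0] [t0 Ht0] Henc Hxor.
  destruct (max_exists S (SN A n) n ltac:(exists s0; exact Hs0) (fun x _ => SN_le A n x)) as [mS HmS].
  destruct (max_exists T (SN A n) n ltac:(exists t0; exact Ht0) (fun x _ => SN_le A n x)) as [mT HmT].
  exists mS, mT. split; [exact HmS|]. split; [exact HmT|].
  destruct HmT as [[y0 [Hy0 Ey0]] _].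
  destruct HmS as [_ HSle].
  destruct (classic (exists k, SN_cond A n y0 k)) as [Hw|Hnw].
  - pose proof (SN_spec A n y0 Hw) as W. rewrite Ey0 in W.
    destruct W as [Hk [Hd Hnd]].
    assert (HN : Nbhd (A mT) y0) by (destruct (classic (drawn A n y0)) as [D|D];
      [apply Hd in D | apply Hnd in D]; tauto).
    destruct HN as [a [Ha Hya]].
    assert (Hs : exists s, S s /\ ball1 a s).
    { apply NNPP. intro Hno. apply (Henc a (fun s Hs Hb => Hno (ex_intro _ s (conj Hs Hb))) y0 Hy0).
      exact Hya. }
    destruct Hs as [s [Hs Hsa]].
    assert (Ns : Nbhd (A mT) s) by (exists a; split; assumption).
    assert (Ws : SN_cond A n s (SN A n s)) by
      (apply SN_spec, witness_exists; exists mT; split; [lia|exact Ns]).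
    destruct Ws as [Hk' [Hd' Hnd']].
    specialize (HSle s Hs).
    destruct (Hxor s y0 Hs Hy0) as [[D1 D2]|[D1 D2]].
    + destruct (Hnd D2) as [E1 _]. destruct (Hd' D1) as [O1 [_ L1]].
      destruct (le_lt_dec mT (SN A n s)) as [Hle|Hlt].
      * destruct (Nat.eq_dec mT (SN A n s)) as [Heq|]; [|lia].
        rewrite <- Heq in O1. exfalso; exact (odd_even _ O1 E1).
      * exfalso. exact (L1 mT ltac:(lia) E1 Ns).
    + destruct (Hd D2) as [O1 _]. destruct (Hnd' D1) as [E1 [_ L1]].
      destruct (le_lt_dec mT (SN A n s)) as [Hle|Hlt].
      * destruct (Nat.eq_dec mT (SN A n s)) as [Heq|]; [|lia].
        rewrite <- Heq in E1. exfalso; exact (odd_even _ O1 E1).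
      * exfalso. exact (L1 mT ltac:(lia) O1 Ns).
  - assert (Hz : SN A n y0 = 0%nat).
    { unfold SN. apply search_none. intros i Hi. apply Hnw. exists i; exact Hi. }
    assert (HD : ~ drawn A n y0).
    { intro D. apply Hnw, witness_exists. exact (Dn_some A y0 n D). }
    destruct (Hxor s0 y0 Hs0 Hy0) as [[D1 _]|[_ D2]]; [|contradiction].
    assert (Ws : SN_cond A n s0 (SN A n s0)) by
      (apply SN_spec, witness_exists; exact (Dn_some A s0 n D1)).
    destruct Ws as [Hk' _]. specialize (HSle s0 Hs0). lia.
Qed.
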